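(* Let $a,b,c,k,m>0$ and consider the system $$\frac{dx}{dt}=bx(1-x-cy),\qquad \frac{dy}{dt}=y\Big(\frac{1}{1+kx}-y-ax-mxy\Big).$$ Let $k^*=\frac{1}{a}-1$. If $0<k<k^*$ and $0<c<1$, then the system is permanent: there exist constants $0<\mu\le M$, independent of the solution, such that every solution with $x(0)>0$, $y(0)>0$ satisfies $$\mu\le\liminf_{t\to+\infty}x(t)\le\limsup_{t\to+\infty}x(t)\le M,\qquad \mu\le\liminf_{t\to+\infty}y(t)\le\limsup_{t\to+\infty}y(t)\le M.$$
   Context: All parameters $a,b,c,k,m$ are positive constants. *)

(* Defs.v *)
From Stdlib Require Import Reals.
From Coquelicot Require Import Coquelicot.
Open Scope R_scope.

(* mu <= liminf_{t -> +oo} f t  (liminf taken in the extended reals),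
   written out: for every eps > 0, eventually f t >= mu - eps. *)
Definition liminf_ge (f : R -> R) (mu : R) : Prop :=
  forall eps : R, 0 < eps -> exists T : R, forall t : R, T <= t -> mu - eps <= f t.

Definition limsup_le (f : R -> R) (M : R) : Prop :=
  forall eps : R, 0 < eps -> exists T : R, forall t : R, T <= t -> f t <= M + eps.

Definition is_solution (a b c k m : R) (x y : R -> R) : Prop :=
  filterlim x (at_right 0) (locally (x 0)) /\
  filterlim y (at_right 0) (locally (y 0)) /\
  (forall t : R, 0 < t ->
     is_derive x t (b * x t * (1 - x t - c * y t)) /\
     is_derive y t (y t * (1 / (1 + k * x t) - y t - a * x t - m * x t * y t))).

(* Main.v *)
Require Import Defs.
From Stdlib Require Import Reals Lra Psatz Classical.
From Coquelicot Require Import Coquelicot.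
Open Scope R_scope.

Lemma cont_eps f t : continuity_pt f t -> forall eps, 0 < eps ->
  exists d, 0 < d /\ forall r, Rabs (r - t) < d -> Rabs (f r - f t) < eps.
Proof.
  intros H eps He. destruct (H eps He) as [d [Hd H2]].
  exists d; split; auto. intros r Hr.
  destruct (Req_dec r t) as [->|Hne].
  - rewrite Rminus_diag, Rabs_R0; lra.
  - apply H2. split. split; [exact I| auto]. exact Hr.
Qed.

Lemma deriv_cont f t l : is_derive f t l -> continuity_pt f t.
Proof.
  intros H. apply continuity_pt_filterlim.
  apply (ex_derive_continuous f t). exists l; exact H.
Qed.

Lemma deriv_neg_left f c l : is_derive f c l -> l < 0 -> forall a, a < c ->
  exists s, a <= s < c /\ f c < f s.
Proof.
  intros H Hl a Ha. apply is_derive_Reals in H.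
  destruct (H (- l / 2)) as [[d Hd] H2]. lra.
  set (h := - Rmin (d/2) (c - a)).
  assert (Hh1 : h < 0). { unfold h. apply Ropp_lt_gt_0_contravar. apply Rmin_pos; lra. }
  assert (Hh2 : - h <= d/2) by (unfold h; rewrite Ropp_involutive; apply Rmin_l).
  assert (Hh3 : - h <= c - a) by (unfold h; rewrite Ropp_involutive; apply Rmin_r).
  specialize (H2 h ltac:(lra)). simpl in H2.
  assert (Rabs h < d) by (rewrite Rabs_left; lra).
  specialize (H2 H0).
  exists (c + h). split. lra.
  set (q := (f (c + h) - f c) / h) in H2.
  assert (Hq : f (c + h) - f c = q * h) by (unfold q; field; lra).
  apply Rabs_def2 in H2. nra.
Qed.

Lemma stay_below f df T L :
  (forall t, T < t -> is_derive f t (df t)) ->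
  (forall t, T < t -> L < f t -> df t < 0) ->
  forall t2 t1, T < t2 -> t2 <= t1 -> f t2 <= L -> f t1 <= L.
Proof.
  intros HD HN t2 t1 H2 H21 Hf2.
  destruct (Rle_or_lt (f t1) L) as [ok|Hgt]; [exact ok|exfalso].
  destruct (continuity_ab_maj f t2 t1 H21) as [c [Hmax Hc]].
  { intros r Hr. apply (deriv_cont f r (df r)). apply HD. lra. }
  assert (Hfc : f t1 <= f c) by (apply Hmax; lra).
  assert (Hct : t2 < c).
  { destruct (Req_dec c t2) as [E|E]. subst c. lra. lra. }
  destruct (deriv_neg_left f c (df c) (HD c ltac:(lra)) (HN c ltac:(lra) ltac:(lra)) t2 Hct)
    as [s [Hs Hfs]].
  specialize (Hmax s ltac:(lra)). lra.
Qed.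
Lemma eventually_below f df T L :
  (forall t, T < t -> is_derive f t (df t)) ->
  (forall t, T < t -> L < f t -> df t < 0) ->
  (forall t0, T < t0 -> L < f t0 -> exists d, 0 < d /\
      forall t, T < t -> L < f t -> f t <= f t0 -> df t <= - d) ->
  exists T', forall t, T' <= t -> f t <= L.
Proof.
  intros HD HN HU.
  set (t0 := T + 1).
  destruct (classic (exists t2, t0 <= t2 /\ f t2 <= L)) as [[t2 [Ht2 Hf2]]|Hno].
  { exists t2. intros t Ht. apply (stay_below f df T L HD HN t2 t); auto. unfold t0 in *; lra. }
  exfalso.
  assert (Hall : forall t, t0 <= t -> L < f t).
  { intros t Ht. destruct (Rle_or_lt (f t) L); auto. exfalso; apply Hno; exists t; auto. }
  set (m := f t0).
  assert (Hm : L < m) by (apply Hall; lra).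
  assert (Hbm : forall t, t0 <= t -> f t <= m).
  { intros t Ht. assert (HN' : forall r, T < r -> m < f r -> df r < 0) by (intros r Hr Hfr; apply HN; lra).
    apply (stay_below f df T m HD HN' t0 t). unfold t0; lra. exact Ht. unfold m; right; reflexivity. }
  destruct (HU t0 ltac:(unfold t0; lra) Hm) as [d [Hd Hd2]].
  set (t1 := t0 + (m - L) / d + 1).
  assert (Hpos : 0 <= (m - L) / d) by (apply Rdiv_le_0_compat; lra).
  destruct (MVT_gen f t0 t1 df) as [c [Hc Heq]].
  { intros r Hr. rewrite Rmin_left in Hr by (unfold t1; lra). apply HD. unfold t0 in *; lra. }
  { intros r Hr. rewrite Rmin_left in Hr by (unfold t1; lra).
    apply (deriv_cont f r (df r)). apply HD. unfold t0 in *; lra. }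
  rewrite Rmin_left in Hc by (unfold t1; lra).
  rewrite Rmax_right in Hc by (unfold t1; lra).
  assert (Hdc : df c <= - d).
  { apply Hd2. unfold t0 in *; lra. apply Hall; lra. apply Hbm; lra. }
  assert (Hft1 : L < f t1) by (apply Hall; unfold t1; lra).
  assert (E : (m - L) / d * d = m - L) by (field; lra).
  unfold t1 in Heq, Hft1. fold m in Heq. nra.
Qed.

Lemma eventually_above f df T L :
  (forall t, T < t -> is_derive f t (df t)) ->
  (forall t, T < t -> f t < L -> 0 < df t) ->
  (forall t0, T < t0 -> f t0 < L -> exists d, 0 < d /\
      forall t, T < t -> f t < L -> f t0 <= f t -> d <= df t) ->
  exists T', forall t, T' <= t -> L <= f t.
Proof.
  intros HD HN HU.
  destruct (eventually_below (fun t => - f t) (fun t => - df t) T (- L)) as [T' HT'].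
  - intros t Ht. apply (is_derive_opp f). auto.
  - intros t Ht H. specialize (HN t Ht ltac:(lra)). lra.
  - intros t0 Ht0 Hm. destruct (HU t0 Ht0 ltac:(lra)) as [d [Hd H]]. exists d; split; auto.
    intros t Ht H1 H2. specialize (H t Ht ltac:(lra) ltac:(lra)). lra.
  - exists T'. intros t Ht. specialize (HT' t Ht). simpl in HT'. lra.
Qed.

Lemma ev_below_unif f df T L d : 0 < d ->
  (forall t, T < t -> is_derive f t (df t)) ->
  (forall t, T < t -> L < f t -> df t <= - d) ->
  exists T', forall t, T' <= t -> f t <= L.
Proof.
  intros Hd HD HN. apply (eventually_below f df T L HD).
  - intros t Ht H. specialize (HN t Ht H). lra.
  - intros t0 _ _. exists d. split; [exact Hd|]. intros t Ht H _. auto.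
Qed.

Lemma real_ind a b (Q : R -> Prop) : a <= b -> Q a ->
  (forall t, a < t <= b -> (forall r, a <= r < t -> Q r) -> Q t) ->
  (forall t, a <= t < b -> (forall r, a <= r <= t -> Q r) ->
     exists e, 0 < e /\ forall r, t < r < t + e -> Q r) ->
  forall t, a <= t <= b -> Q t.
Proof.
  intros Hab Qa Hcl Hop.
  set (E := fun r => a <= r <= b /\ forall u, a <= u <= r -> Q u).
  assert (Eb : bound E) by (exists b; intros r [Hr _]; lra).
  assert (Ea : exists r, E r).
  { exists a. split. lra. intros u Hu. replace u with a by lra. exact Qa. }
  destruct (completeness E Eb Ea) as [sg [Hub Hlub]].
  assert (Hasg : a <= sg).
  { apply Hub. split. lra. intros u Hu. replace u with a by lra. exact Qa. }
  assert (Hsgb : sg <= b) by (apply Hlub; intros r [Hr _]; lra).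
  assert (Hbel : forall r, a <= r < sg -> Q r).
  { intros r Hr. destruct (classic (exists e, E e /\ r < e)) as [[e [[He1 He2] Hre]]|Hn].
    - apply He2. lra.
    - exfalso. assert (sg <= r).
      { apply Hlub. intros e He. destruct (Rle_or_lt e r); auto. exfalso; apply Hn; exists e; auto. }
      lra. }
  assert (Hsg : Q sg).
  { destruct (Req_dec sg a) as [->|Hne]. exact Qa. apply Hcl. lra. exact Hbel. }
  assert (Hupto : forall r, a <= r <= sg -> Q r).
  { intros r Hr. destruct (Req_dec r sg) as [->|Hne]. exact Hsg. apply Hbel. lra. }
  assert (Heq : sg = b).
  { destruct (Req_dec sg b) as [E1|Hne]; auto. exfalso.
    destruct (Hop sg ltac:(lra) Hupto) as [e [He He2]].
    set (r := Rmin (sg + e/2) b).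
    assert (r <= sg).
    { apply Hub. split. unfold r. split. apply Rmin_glb; lra. apply Rmin_r.
      intros u Hu. destruct (Rle_or_lt u sg). apply Hupto; lra.
      apply He2. split. lra. assert (r <= sg + e/2) by apply Rmin_l. lra. }
    assert (sg < r). { unfold r. apply Rmin_glb_lt; lra. }
    lra. }
  intros t Ht. apply Hupto. lra.
Qed.

Lemma exp_part K s r : is_derive (fun r => exp ((K+1)*(r-s))) r ((K+1)*exp((K+1)*(r-s))).
Proof. auto_derive. auto. unfold Rminus. ring. Qed.

Lemma pos_sol f g : 0 < f 0 -> filterlim f (at_right 0) (locally (f 0)) ->
  (forall t, 0 < t -> is_derive f t (f t * g t)) ->
  (forall t, 0 < t -> continuity_pt g t) ->
  forall t, 0 < t -> 0 < f t.
Proof.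
  intros H0 Hrc HD Hg t1 Ht1.
  assert (Hcf : forall t, 0 < t -> continuity_pt f t).
  { intros t Ht. apply (deriv_cont f t _ (HD t Ht)). }
  pose proof (proj1 (@filterlim_locally R R_UniformSpace (at_right 0) _ f (f 0)) Hrc) as Hrc2. clear Hrc; rename Hrc2 into Hrc.
  destruct (Hrc (mkposreal (f 0 / 2) ltac:(lra))) as [d Hd].
  set (s := Rmin t1 (d / 2)).
  assert (Hs0 : 0 < s) by (apply Rmin_pos; [lra| destruct d; simpl; lra]).
  assert (Hst : s <= t1) by apply Rmin_l.
  assert (Hfs : 0 < f s).
  { assert (HH : ball 0 d s).
    { assert (s <= d/2) by apply Rmin_r. destruct d as [d dp]; simpl in *.
      unfold ball; simpl; unfold AbsRing_ball, abs, minus, plus, opp; simpl.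
      rewrite Rabs_right; lra. }
    specialize (Hd s HH Hs0). revert Hd.
    unfold ball; simpl; unfold AbsRing_ball, abs, minus, plus, opp; simpl.
    intros Hd. apply Rabs_def2 in Hd. lra. }
  destruct (continuity_ab_min g s t1 Hst) as [mn [Hmn Hmn2]].
  { intros c Hc. apply Hg. lra. }
  set (K := Rabs (g mn)).
  assert (HgK : forall c, s <= c <= t1 -> - K <= g c).
  { intros c Hc. specialize (Hmn c Hc). unfold K. pose proof (Rabs_pos (g mn)).
    pose proof (Rle_abs (- g mn)). rewrite Rabs_Ropp in H1. lra. }
  assert (HK : 0 <= K) by apply Rabs_pos.
  set (Eb := exp ((K+1)*(t1-s))).
  assert (HEb : 0 < Eb) by apply exp_pos.
  apply (real_ind s t1 (fun r => 0 < f r)); auto; [| |lra].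
  -
    intros t Ht Hbel.
    assert (Hlow : forall r, s <= r < t -> f s / Eb <= f r).
    { intros r Hr.
      set (u := fun r => f r * exp ((K+1)*(r-s))).
      assert (Hu : u s <= u r).
      { destruct (Req_dec r s) as [->|Hne]. lra.
        destruct (MVT_gen u s r (fun c => f c * g c * exp ((K+1)*(c-s)) + f c * ((K+1)*exp((K+1)*(c-s)))))
          as [c [Hc Heq]].
        - intros c Hc. rewrite Rmin_left in Hc by lra. rewrite Rmax_right in Hc by lra.
          unfold u. apply (is_derive_mult f (fun r => exp ((K+1)*(r-s)))).
          apply HD; lra. apply exp_part. intros; apply Rmult_comm.
        - intros c Hc. rewrite Rmin_left in Hc by lra. rewrite Rmax_right in Hc by lra.
          unfold u. apply continuity_pt_mult. apply Hcf; lra.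
          apply (deriv_cont _ _ _ (exp_part K s c)).
        - rewrite Rmin_left in Hc by lra. rewrite Rmax_right in Hc by lra.
          assert (0 < f c) by (apply Hbel; lra).
          assert (- K <= g c) by (apply HgK; lra).
          assert (0 < exp ((K+1)*(c-s))) by apply exp_pos.
          assert (0 <= f c * exp ((K + 1) * (c - s)) * (g c + K + 1)).
          { apply Rmult_le_pos. apply Rmult_le_pos; lra. lra. }
          nra. }
      unfold u in Hu. rewrite Rminus_diag, Rmult_0_r, exp_0, Rmult_1_r in Hu.
      assert (exp ((K + 1) * (r - s)) <= Eb).
      { unfold Eb. destruct (Req_dec ((K + 1) * (r - s)) ((K + 1) * (t1 - s))) as [E|E].
        rewrite E; lra. left; apply exp_increasing. nra. }
      assert (0 < f r) by (apply Hbel; lra).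
      apply (Rmult_le_reg_r Eb). exact HEb.
      unfold Rdiv. rewrite Rmult_assoc, Rinv_l, Rmult_1_r by lra. nra. }
    destruct (Rlt_or_le 0 (f t)) as [ok|Hle]; [exact ok|exfalso].
    assert (Hq : 0 < f s / Eb) by (apply Rdiv_lt_0_compat; lra).
    destruct (cont_eps f t (Hcf t ltac:(lra)) _ Hq) as [e [He He2]].
    set (r := Rmax s (t - e/2)).
    assert (s <= r) by apply Rmax_l.
    assert (t - e/2 <= r) by apply Rmax_r.
    assert (r < t). { unfold r. apply Rmax_lub_lt; lra. }
    specialize (He2 r ltac:(rewrite Rabs_left; lra)).
    specialize (Hlow r ltac:(lra)).
    apply Rabs_def2 in He2. lra.
  -
    intros t Ht Hupto.
    assert (Hft : 0 < f t) by (apply Hupto; lra).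
    destruct (cont_eps f t (Hcf t ltac:(lra)) _ Hft) as [e [He He2]].
    exists e. split; auto. intros r Hr.
    specialize (He2 r ltac:(rewrite Rabs_right; lra)). apply Rabs_def2 in He2. lra.
Qed.

Lemma cst_c v t : continuity_pt (fun _ : R => v) t.
Proof. apply continuity_pt_const. intros u w; reflexivity. Qed.

Theorem theorem3 (a b c k m : R) :
  0 < a -> 0 < b -> 0 < c -> 0 < k -> 0 < m ->
  k < 1 / a - 1 -> c < 1 ->
  exists mu M : R, 0 < mu /\ mu <= M /\
    forall x y : R -> R,
      is_solution a b c k m x y -> 0 < x 0 -> 0 < y 0 ->
      liminf_ge x mu /\ limsup_le x M /\ liminf_ge y mu /\ limsup_le y M.
Proof.
  intros Ha Hb Hc Hk Hm Hka Hc1.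
  set (w := 1 / (1 + k)).
  assert (Hw : w * (1 + k) = 1) by (unfold w; field; lra).
  assert (Hw0 : 0 < w) by (unfold w; apply Rdiv_lt_0_compat; lra).
  set (A0 := w - a).
  assert (HA0 : 0 < A0).
  { unfold A0. assert (a * (1 + k) < 1).
    { assert (Hia : a * (1/a) = 1) by (field; lra). nra. }
    nra. }
  set (mu := Rmin (1 - c) (A0 / (2 * (1 + 2 * m)))).
  assert (Hmu1 : mu <= 1 - c) by apply Rmin_l.
  assert (Hmu2 : mu <= A0 / (2 * (1 + 2 * m))) by apply Rmin_r.
  assert (Hmu2' : mu * (2 * (1 + 2 * m)) <= A0).
  { assert (E : A0 / (2 * (1 + 2 * m)) * (2 * (1 + 2 * m)) = A0) by (field; lra). nra. }
  exists mu, 1. split; [|split].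
  { apply Rmin_pos. lra. apply Rdiv_lt_0_compat; lra. }
  { lra. }
  intros x y [Hxc [Hyc HD]] Hx0 Hy0.
  assert (HDx : forall t, 0 < t -> is_derive x t (b * x t * (1 - x t - c * y t))) by (intros; apply HD; auto).
  assert (HDy : forall t, 0 < t -> is_derive y t (y t * (1 / (1 + k * x t) - y t - a * x t - m * x t * y t)))
    by (intros; apply HD; auto).
  assert (Hcx : forall t, 0 < t -> continuity_pt x t) by (intros t Ht; exact (deriv_cont _ _ _ (HDx t Ht))).
  assert (Hcy : forall t, 0 < t -> continuity_pt y t) by (intros t Ht; exact (deriv_cont _ _ _ (HDy t Ht))).
  assert (Hxp : forall t, 0 < t -> 0 < x t).
  { apply (pos_sol x (fun t => b * (1 - x t - c * y t)) Hx0 Hxc).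
    - intros t Ht. replace (x t * (b * (1 - x t - c * y t))) with (b * x t * (1 - x t - c * y t)) by ring.
      auto.
    - intros t Ht. apply (continuity_pt_mult (fun _ => b) (fun t => 1 - x t - c * y t)). apply cst_c.
      apply (continuity_pt_minus (fun t => 1 - x t) (fun t => c * y t)).
      apply (continuity_pt_minus (fun _ => 1) x). apply cst_c. auto.
      apply (continuity_pt_mult (fun _ => c) y). apply cst_c. auto. }
  assert (Hyp : forall t, 0 < t -> 0 < y t).
  { apply (pos_sol y (fun t => 1 / (1 + k * x t) - y t - a * x t - m * x t * y t) Hy0 Hyc).
    - intros t Ht. auto.
    - intros t Ht.
      apply (continuity_pt_minus (fun t => 1 / (1 + k * x t) - y t - a * x t) (fun t => m * x t * y t)).
      apply (continuity_pt_minus (fun t => 1 / (1 + k * x t) - y t) (fun t => a * x t)).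
      apply (continuity_pt_minus (fun t => 1 / (1 + k * x t)) y).
      apply (continuity_pt_div (fun _ => 1) (fun t => 1 + k * x t)). apply cst_c.
      apply (continuity_pt_plus (fun _ => 1) (fun t => k * x t)). apply cst_c.
      apply (continuity_pt_mult (fun _ => k) x). apply cst_c. auto.
      specialize (Hxp t Ht). nra. auto.
      apply (continuity_pt_mult (fun _ => a) x). apply cst_c. auto.
      apply (continuity_pt_mult (fun t => m * x t) y).
      apply (continuity_pt_mult (fun _ => m) x). apply cst_c. auto. auto. }
  assert (Hxup : forall e, 0 < e -> exists T, forall t, T <= t -> x t <= 1 + e).
  { intros e He.
    apply (ev_below_unif x (fun t => b * x t * (1 - x t - c * y t)) 0 (1 + e) (b * (1 + e) * e)).
    apply Rmult_lt_0_compat; [apply Rmult_lt_0_compat|]; lra.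
    exact HDx.
    intros t Ht HX. specialize (Hyp t Ht). set (X := x t) in *. set (Y := y t) in *.
    assert (X * (1 - X) <= - ((1 + e) * e)) by nra.
    assert (0 <= b * c * X * Y).
    { apply Rmult_le_pos. apply Rmult_le_pos. apply Rmult_le_pos. all: lra. }
    nra. }
  assert (Hyup : forall e, 0 < e -> exists T, forall t, T <= t -> y t <= 1 + e).
  { intros e He.
    apply (ev_below_unif y (fun t => y t * (1 / (1 + k * x t) - y t - a * x t - m * x t * y t)) 0 (1 + e) ((1 + e) * e)).
    nra. exact HDy.
    intros t Ht HY. specialize (Hxp t Ht). set (X := x t) in *. set (Y := y t) in *.
    set (z := 1 / (1 + k * X)).
    assert (Hz : z * (1 + k * X) = 1) by (unfold z; field; nra).
    assert (Hz0 : 0 < z) by (unfold z; apply Rdiv_lt_0_compat; nra).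
    assert (0 <= z * (k * X)) by (apply Rmult_le_pos; nra).
    assert (Hz1 : z <= 1) by nra.
    assert (Y * (1 - Y) <= - ((1 + e) * e)) by nra.
    assert (0 <= a * X * Y) by (apply Rmult_le_pos; [apply Rmult_le_pos|]; lra).
    assert (0 <= m * X * Y * Y) by (apply Rmult_le_pos; [apply Rmult_le_pos; [apply Rmult_le_pos|]|]; lra).
    assert (Y * z <= Y) by nra.
    nra. }
  split; [|split; [|split]].
  -
    intros eps Heps.
    destruct (Rle_or_lt (mu - eps) 0) as [Hneg|Hpos].
    { exists 1. intros t Ht. specialize (Hxp t ltac:(lra)). lra. }
    destruct (Hyup (eps / (2 * c)) ltac:(apply Rdiv_lt_0_compat; lra)) as [T1 HT1].
    assert (Hce : c * (eps / (2 * c)) = eps / 2) by (field; lra).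
    apply (eventually_above x (fun t => b * x t * (1 - x t - c * y t)) (Rmax T1 0) (mu - eps)).
    + intros t Ht. apply HDx. pose proof (Rmax_r T1 0). lra.
    + intros t Ht HX. assert (0 < t) by (pose proof (Rmax_r T1 0); lra).
      assert (T1 <= t) by (pose proof (Rmax_l T1 0); lra).
      specialize (HT1 t ltac:(lra)). specialize (Hxp t ltac:(lra)).
      assert (0 < 1 - x t - c * y t) by nra.
      apply Rmult_lt_0_compat. apply Rmult_lt_0_compat; lra. lra.
    + intros t0 Ht0 _.
      assert (0 < t0) by (pose proof (Rmax_r T1 0); lra).
      assert (Hx0' := Hxp t0 H).
      exists (b * x t0 * (eps / 2)). split.
      { apply Rmult_lt_0_compat. apply Rmult_lt_0_compat; lra. lra. }
      intros t Ht HX HX0. assert (0 < t) by (pose proof (Rmax_r T1 0); lra).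
      assert (T1 <= t) by (pose proof (Rmax_l T1 0); lra).
      specialize (HT1 t ltac:(lra)).
      assert (eps / 2 <= 1 - x t - c * y t) by nra.
      assert (b * x t0 <= b * x t) by nra.
      assert (0 <= b * x t0) by nra.
      apply Rmult_le_compat; lra.
  -
    intros eps Heps. destruct (Hxup eps Heps) as [T HT]. exists T. exact HT.
  -
    intros eps Heps.
    destruct (Rle_or_lt (mu - eps) 0) as [Hneg|Hpos].
    { exists 1. intros t Ht. specialize (Hyp t ltac:(lra)). lra. }
    set (e := Rmin 1 (A0 / (2 * (k + a)))).
    assert (He1 : e <= 1) by apply Rmin_l.
    assert (He0 : 0 < e) by (apply Rmin_pos; [lra| apply Rdiv_lt_0_compat; lra]).
    assert (He2 : e * (k + a) <= A0 / 2).
    { assert (e <= A0 / (2 * (k + a))) by apply Rmin_r.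
      assert (E : A0 / (2 * (k + a)) * (k + a) = A0 / 2) by (field; lra). nra. }
    destruct (Hxup e He0) as [T1 HT1].
    assert (Hkey : forall t, 0 < t -> T1 <= t -> y t < mu - eps ->
       eps * (1 + 2 * m) < 1 / (1 + k * x t) - y t - a * x t - m * x t * y t).
    { intros t Ht Ht1 HY. specialize (HT1 t Ht1). specialize (Hxp t Ht). specialize (Hyp t Ht).
      set (X := x t) in *. set (Y := y t) in *.
      set (z := 1 / (1 + k * X)).
      assert (Hz : z * (1 + k * X) = 1) by (unfold z; field; nra).
      assert (Hz0 : 0 < z) by (unfold z; apply Rdiv_lt_0_compat; nra).
      assert (0 <= z * (k * (1 + e - X))) by (apply Rmult_le_pos; nra).
      assert (Hz2 : 1 <= z * (1 + k + k * e)) by nra.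
      assert (Hw2 : (w - k * e) * (1 + k + k * e) <= 1).
      { assert (w <= 1) by nra.
        assert (0 <= (k * e) * (1 + k - w)) by (apply Rmult_le_pos; nra).
        assert (0 <= (k * e) * (k * e)) by nra. nra. }
      assert (Hzw : w - k * e <= z) by nra.
      assert (HaX : a * X <= a + a * e) by nra.
      assert (0 <= (2 - X) * (m * Y)) by (apply Rmult_le_pos; nra).
      assert (HmXY : m * X * Y <= 2 * m * Y) by nra.
      assert (Y * (1 + 2 * m) < A0 / 2 - eps * (1 + 2 * m)).
      { assert (E : A0 / 2 = mu * (1 + 2 * m) + (A0/2 - mu * (1 + 2 * m))) by ring. nra. }
      unfold A0 in *. nra. }
    apply (eventually_above y (fun t => y t * (1 / (1 + k * x t) - y t - a * x t - m * x t * y t)) (Rmax T1 0) (mu - eps)).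
    + intros t Ht. apply HDy. pose proof (Rmax_r T1 0). lra.
    + intros t Ht HY. assert (0 < t) by (pose proof (Rmax_r T1 0); lra).
      assert (T1 <= t) by (pose proof (Rmax_l T1 0); lra).
      specialize (Hkey t ltac:(lra) ltac:(lra) HY). specialize (Hyp t ltac:(lra)).
      apply Rmult_lt_0_compat. lra. nra.
    + intros t0 Ht0 _.
      assert (0 < t0) by (pose proof (Rmax_r T1 0); lra).
      assert (Hy0' := Hyp t0 H).
      exists (y t0 * (eps * (1 + 2 * m))). split.
      { apply Rmult_lt_0_compat. lra. nra. }
      intros t Ht HY HY0. assert (0 < t) by (pose proof (Rmax_r T1 0); lra).
      assert (T1 <= t) by (pose proof (Rmax_l T1 0); lra).
      specialize (Hkey t ltac:(lra) ltac:(lra) HY).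
      apply Rmult_le_compat; nra.
  -
    intros eps Heps. destruct (Hyup eps Heps) as [T HT]. exists T. exact HT.
Qed.
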